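(* Let $G$ be a $\Delta$-regular graph on $n$ vertices in which every two adjacent vertices have at least $\lambda$ common neighbors. (i) If $\Delta-\lambda\equiv0\pmod 2$, then $\alpha_{\mathrm{od}}(G)\le\frac{\Delta-\lambda-1}{2\Delta-\lambda-1}n$. (ii) If $\Delta-\lambda\equiv1\pmod2$, then $\alpha_{\mathrm{od}}(G)\le\frac{\Delta-\lambda}{2\Delta-\lambda}n$.
   Context: An odd independent set in $G=(V,E)$ is an independent set $S$ such that every $v\in V\setminus S$ has either no neighbor or an odd number of neighbors in $S$; $\alpha_{\mathrm{od}}(G)$ is its maximum size. *)

(* Defs.v *)
From mathcomp Require Import all_boot all_order all_algebra.
Set Implicit Arguments. Unset Strict Implicit. Unset Printing Implicit Defensive.

Definition simple_graph (T : finType) (e : rel T) : Prop :=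
  symmetric e /\ irreflexive e.

Definition neighbors (T : finType) (e : rel T) (v : T) : {set T} :=
  [set u | e v u].

Definition regular (T : finType) (e : rel T) (D : nat) : Prop :=
  forall v : T, #|neighbors e v| = D.

Definition adj_common_ge (T : finType) (e : rel T) (l : nat) : Prop :=
  forall u v : T, e u v -> l <= #|neighbors e u :&: neighbors e v|.

Definition independent (T : finType) (e : rel T) (S : {set T}) : bool :=
  [forall x in S, forall y in S, ~~ e x y].

Definition odd_independent (T : finType) (e : rel T) (S : {set T}) : bool :=
  independent e S &&
  [forall v in ~: S, (#|neighbors e v :&: S| == 0) || odd #|neighbors e v :&: S|].

Definition alpha_od (T : finType) (e : rel T) : nat :=
  \max_(S : {set T} | odd_independent e S) #|S|.

(* Main.v *)
Require Import Defs.
From mathcomp Require Import all_boot all_order all_algebra.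
From mathcomp Require Import zify.
Import Order.TTheory GRing.Theory Num.Theory.

Section Aux.
Variables (T : finType) (e : rel T) (D l : nat).
Hypotheses (Hg : simple_graph e) (Hr : regular e D) (Hc : adj_common_ge e l).

Lemma nbr_bound (S : {set T}) v : independent e S ->
  0 < #|neighbors e v :&: S| -> #|neighbors e v :&: S| + l <= D.
Proof.
move=> /forallP Hind /card_gt0P [u]; rewrite inE => /andP [].
rewrite inE => evu uS.
have euv : e u v by rewrite (proj1 Hg).
have Hl := Hc _ _ euv.
have dis : (neighbors e v :&: S) :&: (neighbors e u :&: neighbors e v) = set0.
  apply/setP => x; rewrite !inE.
  apply/negP => /andP [/andP [_ xS] /andP [eux _]].
  by move: (Hind u) => /implyP /(_ uS) /forallP /(_ x) /implyP /(_ xS); rewrite eux.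
rewrite -(Hr v).
apply: leq_trans (leq_add (leqnn _) Hl) _.
rewrite -cardsUI dis cards0 addn0.
apply: subset_leq_card.
apply/subsetP => x; rewrite !inE => /orP [/andP[]|/andP[]] //.
Qed.

Lemma dcount (S : {set T}) : independent e S ->
  #|S| * D = \sum_(v in ~: S) #|neighbors e v :&: S|.
Proof.
move=> /forallP Hind.
have -> : #|S| * D = \sum_(u in S) #|neighbors e u|.
  by rewrite (eq_bigr (fun _ => D)) ?sum_nat_const // => u _; rewrite Hr.
have E1 u : #|neighbors e u| = \sum_v (if e u v then 1 else 0).
  by rewrite -sum1_card big_mkcond /=; apply: eq_bigr => v _; rewrite inE.
rewrite (eq_bigr _ (fun u _ => E1 u)) exchange_big /=.
rewrite (bigID (fun v => v \in S)) /=.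
rewrite big1 ?add0n; last first.
  move=> v vS; rewrite big1 // => u uS.
  by move: (Hind u) => /implyP /(_ uS) /forallP /(_ v) /implyP /(_ vS) /negbTE ->.
apply: eq_big => [v|v _]; first by rewrite inE.
rewrite -sum1_card big_mkcond /= [in RHS]big_mkcond /=.
apply: eq_bigr => u _; rewrite !inE (proj1 Hg u v).
by case: (u \in S); case: (e v u).
Qed.

Lemma odd_bound (S : {set T}) k :
  (forall c, 0 < c -> odd c -> c + l <= D -> c <= k) ->
  odd_independent e S -> #|S| * (D + k) <= k * #|T|.
Proof.
move=> Hk /andP [Hind /forallP Hodd].
have H1 : #|S| * D <= #|~: S| * k.
  rewrite dcount // -sum_nat_const; apply: leq_sum => v vS.
  move: (Hodd v) => /implyP /(_ vS) /orP [/eqP -> //|Ho].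
  have Hp : 0 < #|neighbors e v :&: S| by case: (#|neighbors e v :&: S|) Ho.
  exact: (Hk _ Hp Ho (@nbr_bound S v Hind Hp)).
rewrite -(cardsC S) !mulnDr; nia.
Qed.

Lemma alpha_bound k :
  (forall c, 0 < c -> odd c -> c + l <= D -> c <= k) ->
  alpha_od e * (D + k) <= k * #|T|.
Proof.
move=> Hk; rewrite /alpha_od.
elim/big_ind: _ => //.
  by move=> x y Hx Hy; rewrite /maxn; case: ifP.
move=> S HS; exact: odd_bound.
Qed.

Lemma alpha_le_n : alpha_od e <= #|T|.
Proof.
rewrite /alpha_od; elim/big_ind: _ => //.
  by move=> x y Hx Hy; rewrite geq_max Hx Hy.
move=> S _; exact: max_card.
Qed.

End Aux.


Lemma fin_step (a k m n : nat) : (0 < m)%N -> (a * m <= k * n)%N ->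
  ((a%:R : rat) <= (k%:Z)%:~R / (m%:Z)%:~R * n%:R)%R.
Proof.
move=> Hm H.
by rewrite !pmulrn mulrAC ler_pdivlMr ?ltr0n // -!natrM ler_nat.
Qed.

Lemma l_lt_D (T : finType) (e : rel T) (D l : nat) :
  simple_graph e -> regular e D -> adj_common_ge e l ->
  (0 < D)%N -> (0 < #|T|)%N -> (l < D)%N.
Proof.
move=> [Hs Hi] Hr Hc HD /card_gt0P [t _].
have : (0 < #|neighbors e t|)%N by rewrite Hr.
move=> /card_gt0P [u]; rewrite inE => etu.
have H := Hc _ _ etu.
have Hu : u \in neighbors e t by rewrite inE.
rewrite -(Hr t) (cardsD1 u) Hu add1n ltnS.
apply: leq_trans H _; apply: subset_leq_card.
apply/subsetP => x; rewrite !inE => /andP [etx eux]; rewrite etx andbT.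
by apply/eqP => xu; move: eux; rewrite xu Hi.
Qed.

Theorem proposition5 (T : finType) (e : rel T) (D l : nat) :
  simple_graph e -> regular e D -> adj_common_ge e l ->
  (((D%:Z - l%:Z) %% 2)%Z = 0%:Z ->
     ((alpha_od e)%:R : rat) <=
       ((D%:Z - l%:Z - 1)%:~R / (2 * D%:Z - l%:Z - 1)%:~R) * (#|T|)%:R)%R /\
  (((D%:Z - l%:Z) %% 2)%Z = 1%:Z ->
     ((alpha_od e)%:R : rat) <=
       ((D%:Z - l%:Z)%:~R / (2 * D%:Z - l%:Z)%:~R) * (#|T|)%:R)%R.
Proof.
move=> Hg Hr Hc.
have Hn := @alpha_le_n T e.
have [n0|npos] := posnP #|T|.
  have a0 : alpha_od e = 0%N by move: Hn; rewrite n0; case: (alpha_od e).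
  by rewrite a0 n0 !mulr0; split.
have [D0|Dpos] := posnP D.
  subst D.
  have Hn' : (((alpha_od e)%:R : rat) <= (#|T|)%:R)%R by rewrite ler_nat.
  split => Hm.
  - rewrite mulr0 (_ : (0%:Z - l%:Z - 1 = 2 * 0%:Z - l%:Z - 1)%R) ?divff ?mul1r //.
    by rewrite intr_eq0; lia.
  - rewrite mulr0 (_ : (0%:Z - l%:Z = 2 * 0%:Z - l%:Z)%R) ?divff ?mul1r //.
    by rewrite intr_eq0; lia.
have HlD := @l_lt_D T e D l Hg Hr Hc Dpos npos.
split => Hm.
- have Hk : forall c, (0 < c)%N -> odd c -> (c + l <= D)%N -> (c <= D - l - 1)%N.
    by move=> c *; lia.
  have H := @alpha_bound T e D l Hg Hr Hc _ Hk.
  rewrite (_ : (D%:Z - l%:Z - 1 = (D - l - 1)%N%:Z)%R); last by lia.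
  rewrite (_ : (2 * D%:Z - l%:Z - 1 = (D + (D - l - 1))%N%:Z)%R); last by lia.
  apply: fin_step H; lia.
- have Hk : forall c, (0 < c)%N -> odd c -> (c + l <= D)%N -> (c <= D - l)%N.
    by move=> c *; lia.
  have H := @alpha_bound T e D l Hg Hr Hc _ Hk.
  rewrite (_ : (D%:Z - l%:Z = (D - l)%N%:Z)%R); last by lia.
  rewrite (_ : (2 * D%:Z - l%:Z = (D + (D - l))%N%:Z)%R); last by lia.
  apply: fin_step H; lia.
Qed.
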